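(* Let $n\ge 6$ be even. If $n\equiv 2\pmod 4$, no circulant or back-circulant Latin square of order $n$ with inner distance $\frac n2-1$ is a row product. If $n\equiv 0\pmod 4$, exactly $2$ circulant and exactly $2$ back-circulant Latin squares of order $n$ with inner distance $\frac n2-1$ and symbol $1$ in cell $(1,1)$ are row products.
   Context: Symbols are $[1,n]$; $\mathrm{dist}(a,b)$ is the minimum of the residues of $a-b$ and $b-a$ modulo $n$. The inner distance of a Latin square is the minimum of $\mathrm{dist}$ over symbols in horizontally or vertically adjacent cells. A circulant Latin square: each row $i+1$ is row $i$ cyclically shifted one position right; back-circulant: shifted one position left. For a Latin square $L=(m_{i,j})$, $H$ is the $n\times(n-1)$ matrix with $h_{i,j}\equiv m_{i,j+1}-m_{i,j}\pmod n$ and $V$ the $(n-1)\times n$ matrix with $v_{i,j}\equiv m_{i+1,j}-m_{i,j}\pmod n$ (entries in $[0,n-1]$). The difference row of a Latin row $(s_1,\dots,s_n)$ is $(h_1,\dots,h_{n-1})$ with $h_j\equiv s_{j+1}-s_j\pmod n$. A row product is a Latin square obtained by adding a constant mod $n$ to all entries of $\mathrm{prod}(d,d')$, the $n\times n$ matrix with $1$ in cell $(1,1)$ whose $H$ has every row equal to a difference row $d$ and whose $V$ has every column equal to a difference row $d'$. *)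

(* Defs.v *)
(* Latin squares of order n are matrices 'M[nat]_n with
   symbols in [1,n]; rows/columns are indexed 0..n-1 (so the paper's cell
   (1,1) is (0,0) here). *)
From mathcomp Require Import all_boot all_order all_algebra.
Set Implicit Arguments.
Unset Strict Implicit.
Unset Printing Implicit Defensive.

Definition dist (n a b : nat) : nat :=
  minn ((a + n - b) %% n) ((b + n - a) %% n).

Definition latin (n : nat) (A : 'M[nat]_n) : Prop :=
  [/\ forall i j, 1 <= A i j <= n,
      forall i, injective (fun j => A i j)
    & forall j, injective (fun i => A i j)].

Definition adj (n : nat) (p q : 'I_n * 'I_n) : bool :=
  ((p.1 == q.1 :> nat) && (p.2.+1 == q.2 :> nat)) ||
  ((p.2 == q.2 :> nat) && (p.1.+1 == q.1 :> nat)).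

(* inner distance: minimum of dist over adjacent cells
   (the default value n is only used when there are no adjacent cells) *)
Definition innerdist (n : nat) (A : 'M[nat]_n) : nat :=
  \big[minn/n]_(p : 'I_n * 'I_n) \big[minn/n]_(q : 'I_n * 'I_n | adj p q)
     dist n (A p.1 p.2) (A q.1 q.2).

Definition circulant (n : nat) (A : 'M[nat]_n) : Prop :=
  forall i i' j j' : 'I_n, i' = i.+1 :> nat -> j' = j.+1 %% n :> nat ->
    A i' j' = A i j.

Definition back_circulant (n : nat) (A : 'M[nat]_n) : Prop :=
  forall i i' j j' : 'I_n, i' = i.+1 :> nat -> j' = j.+1 %% n :> nat ->
    A i' j = A i j'.

Definition one_at_origin (n : nat) (A : 'M[nat]_n) : Prop :=
  forall i j : 'I_n, i = 0 :> nat -> j = 0 :> nat -> A i j = 1.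

Definition latin_row (n : nat) (s : seq nat) : Prop :=
  [/\ size s = n, uniq s & all (fun x => 1 <= x <= n) s].

Definition diff_row (n : nat) (s : seq nat) : seq nat :=
  [seq (nth 0 s j.+1 + n - nth 0 s j) %% n | j <- iota 0 n.-1].

Definition is_diff_row (n : nat) (d : seq nat) : Prop :=
  exists s, latin_row n s /\ d = diff_row n s.

(* prod(d,d'): the n x n matrix with 1 in the top-left cell whose H has every
   row equal to d and whose V has every column equal to d'; explicitly
   m_{i,j} = 1 + (d'_1+...+d'_{i-1}) + (d_1+...+d_{j-1}) mod n, in [1,n]. *)
Definition prodm (n : nat) (d d' : seq nat) : 'M[nat]_n :=
  \matrix_(i < n, j < n)
     ((\sum_(k < i) nth 0 d' k + \sum_(k < j) nth 0 d k) %% n).+1.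

(* row product: prod(d,d') plus a constant mod n (symbols stay in [1,n]) *)
Definition row_product (n : nat) (A : 'M[nat]_n) : Prop :=
  exists d d' c, [/\ is_diff_row n d, is_diff_row n d' &
    forall i j, A i j = (((prodm n d d' i j).-1 + c) %% n).+1].

(* Main.v *)
Require Import Defs.
From mathcomp Require Import all_boot all_order all_algebra.
From mathcomp Require Import zify.

Lemma nmodeqP n x y : x %% n = y %% n <-> exists k1 k2, x + k1 * n = y + k2 * n.
Proof.
split.
- move=> h; exists (y %/ n), (x %/ n).
  rewrite {1}(divn_eq x n) {2}(divn_eq y n) h.
  move: (x %/ n) (y %/ n) (y %% n) => a b r. lia.
- case=> k1 [k2 e]. by rewrite -(modnMDl k1) addnC e addnC modnMDl.
Qed.

Lemma diffmod1 n e1 e2 t : 0 < n -> t < n -> (e1 + t) %% n = e2 %% n ->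
  ((e2 %% n).+1 + n - (e1 %% n).+1) %% n = t.
Proof.
move=> n0 tn /nmodeqP [k1 [k2 e]].
rewrite -{1}(modn_small tn); apply/nmodeqP.
have r1 := ltn_pmod e1 n0.
move: (divn_eq e1 n) (divn_eq e2 n) e r1.
move: (e1 %/ n) (e2 %/ n) (e1 %% n) (e2 %% n) => q1 q2 r1 r2 h1 h2 e r1n.
exists (q2 + k2), (q1 + k1 + 1). lia.
Qed.

Lemma diffmod2 n e1 e2 t : 0 < n -> t < n -> (e1 + t) %% n = e2 %% n ->
  ((e1 %% n).+1 + n - (e2 %% n).+1) %% n = (n - t) %% n.
Proof.
move=> n0 tn /nmodeqP [k1 [k2 e]].
apply/nmodeqP.
have r2 := ltn_pmod e2 n0.
move: (divn_eq e1 n) (divn_eq e2 n) e r2.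
move: (e1 %/ n) (e2 %/ n) (e1 %% n) (e2 %% n) => q1 q2 r1 r2 h1 h2 e r2n.
exists (q1 + k1), (q2 + k2). lia.
Qed.

Lemma dist_step n e1 e2 t : 0 < n -> t < n -> (e1 + t) %% n = e2 %% n ->
  dist n (e1 %% n).+1 (e2 %% n).+1 = minn ((n - t) %% n) t.
Proof. by move=> n0 tn h; rewrite /dist (diffmod1 _ _ _ _ n0 tn h) (diffmod2 _ _ _ _ n0 tn h). Qed.

Lemma dist_sym n a b : dist n a b = dist n b a.
Proof. by rewrite /dist minnC. Qed.

Lemma bigmin_le (I : finType) (P : pred I) (F : I -> nat) n i0 :
  P i0 -> \big[minn/n]_(i | P i) F i <= F i0.
Proof.
move=> Pi0; have : i0 \in index_enum I by rewrite mem_index_enum.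
elim: (index_enum I) => //= x r IH; rewrite in_cons big_cons.
case/orP=> [/eqP <-|/IH h]; first by rewrite Pi0 geq_minl.
by case: (P x) => //; exact: leq_trans (geq_minr _ _) h.
Qed.

Lemma bigmin_const (T : finType) (P : T -> T -> bool) (f : T -> T -> nat) n D p0 q0 :
  (forall p q, P p q -> f p q = D) -> D <= n -> P p0 q0 ->
  \big[minn/n]_p \big[minn/n]_(q | P p q) f p q = D.
Proof.
move=> hf hD hp; apply/eqP; rewrite eqn_leq; apply/andP; split.
- apply: leq_trans (@bigmin_le T xpredT _ n p0 isT) _.
  by rewrite -(hf _ _ hp) (@bigmin_le T (P p0) _ n q0 hp).
- apply: (big_ind (fun x => D <= x)) => //.
  + by move=> x y hx hy; rewrite leq_min hx hy.
  + move=> p _; apply: (big_ind (fun x => D <= x)) => //.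
    * by move=> x y hx hy; rewrite leq_min hx hy.
    * by move=> q /hf ->.
Qed.

Lemma innerdist_form n (A : 'M[nat]_n) t u c : 1 < n -> t < n ->
  (u %% n = t %% n \/ (u + t) %% n = 0) ->
  (forall i j : 'I_n, A i j = ((i * u + j * t + c) %% n).+1) ->
  innerdist A = minn ((n - t) %% n) t.
Proof.
move=> n1 tn hut hA.
have n0 : 0 < n by lia.
rewrite /innerdist.
apply: (@bigmin_const _ _ _ n _ (Ordinal n0, Ordinal n0) (Ordinal n0, Ordinal n1)).
- move=> [i j] [i' j'] /orP [/andP [/eqP /= e1 /eqP /= e2]|/andP [/eqP /= e1 /eqP /= e2]];
    rewrite !hA.
  + apply: dist_step => //. rewrite -e1 -e2. congr (_ %% _). lia.
  + case: hut => hut.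
    * apply: dist_step => //. rewrite -e1 -e2.
      have -> : i.+1 * u + j * t + c = (i * u + j * t + c) + u by lia.
      by rewrite -[RHS]modnDmr hut modnDmr.
    * rewrite dist_sym. apply: dist_step => //. rewrite -e1 -e2.
      have -> : i.+1 * u + j * t + c + t = (i * u + j * t + c) + (u + t) by lia.
      by rewrite -modnDmr hut addn0.
- by rewrite geq_min (ltnW tn) orbT.
- by [].
Qed.


Definition S (d : seq nat) (i : nat) := \sum_(k < i) nth 0 d k.

Lemma SS d i : S d i.+1 = S d i + nth 0 d i.
Proof. by rewrite /S big_ord_recr. Qed.

Lemma S_const d t j : (forall k, k < j -> nth 0 d k = t) -> S d j = j * t.
Proof.
move=> h; rewrite /S (eq_bigr (fun _ => t)) => [|k _]; last exact: h.
by rewrite big_const_ord iter_addn_0 mulnC.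
Qed.

Lemma nth_diff_lt n s k : 0 < n -> k < n.-1 -> nth 0 (diff_row n s) k < n.
Proof. by move=> n0 hk; rewrite /diff_row (nth_map 0) ?size_iota // ltn_pmod. Qed.

Lemma rp_form n (A : 'M[nat]_n) : 0 < n -> row_product A -> exists d d' c,
  (forall k, k < n.-1 -> nth 0 d k < n /\ nth 0 d' k < n) /\
  (forall i j : 'I_n, A i j = ((S d' i + S d j + c) %% n).+1).
Proof.
move=> n0 [d [d' [c [[s [_ ->]] [s' [_ ->]] hA]]]].
exists (diff_row n s), (diff_row n s'), c; split.
- by move=> k hk; rewrite !nth_diff_lt.
- by move=> i j; rewrite hA /prodm mxE /= modnDml.
Qed.

Lemma modeq_small n x y : x < n -> y < n -> x %% n = y %% n -> x = y.
Proof. by move=> hx hy; rewrite !modn_small. Qed.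

Lemma mod0_ex n x : x %% n = 0 -> exists k1 k2, x + k1 * n = 0 + k2 * n.
Proof. by move=> h; apply: (proj1 (nmodeqP n x 0)); rewrite mod0n. Qed.

Lemma rp_struct n (A : 'M[nat]_n) : 1 < n -> row_product A ->
  (circulant A \/ back_circulant A) ->
  exists t u c, [/\ t < n, u < n, (circulant A -> (u + t) %% n = 0),
    (back_circulant A -> u = t) &
    forall i j : 'I_n, A i j = ((i * u + j * t + c) %% n).+1].
Proof.
move=> n1 rp hcb.
have n0 : 0 < n by lia.
case: (rp_form _ _ n0 rp) => d [d' [c [hlt hA]]].
have circ_eq : circulant A -> forall i j, i < n.-1 -> j < n.-1 ->
    (nth 0 d' i + nth 0 d j) %% n = 0.
  move=> hc i j hi hj.
  have hi0 : i < n by lia. have hi1 : i.+1 < n by lia.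
  have hj0 : j < n by lia. have hj1 : j.+1 < n by lia.
  have := hc (Ordinal hi0) (Ordinal hi1) (Ordinal hj0) (Ordinal hj1) erefl
    (esym (modn_small hj1)).
  rewrite !hA /= !SS => -[] /nmodeqP [k1 [k2 e]].
  rewrite -[X in _ = X](mod0n n); apply/nmodeqP; exists k1, k2; lia.
have back_eq : back_circulant A -> forall i j, i < n.-1 -> j < n.-1 ->
    nth 0 d' i %% n = nth 0 d j %% n.
  move=> hc i j hi hj.
  have hi0 : i < n by lia. have hi1 : i.+1 < n by lia.
  have hj0 : j < n by lia. have hj1 : j.+1 < n by lia.
  have := hc (Ordinal hi0) (Ordinal hi1) (Ordinal hj0) (Ordinal hj1) erefl
    (esym (modn_small hj1)).
  rewrite !hA /= !SS => -[] /nmodeqP [k1 [k2 e]].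
  apply/nmodeqP; exists k1, k2; lia.
have z : 0 < n.-1 by lia.
set t := nth 0 d 0; set u := nth 0 d' 0.
have consts : forall k, k < n.-1 -> nth 0 d k = t /\ nth 0 d' k = u.
  move=> k hk; have [hdk hd'k] := hlt k hk; have [hd0 hd'0] := hlt 0 z.
  case: hcb => hc.
  - have e1 := circ_eq hc 0 k z hk; have e2 := circ_eq hc 0 0 z z.
    have e3 := circ_eq hc k 0 hk z.
    move/mod0_ex: e1 => [a1 [a2 e1]]; move/mod0_ex: e2 => [a3 [a4 e2]];
    move/mod0_ex: e3 => [a5 [a6 e3]].
    split; apply: (modeq_small n) => //; apply/nmodeqP.
    + exists (a1 + a4), (a2 + a3); lia.
    + exists (a5 + a4), (a6 + a3); lia.
  - have e1 := back_eq hc 0 k z hk; have e2 := back_eq hc 0 0 z z.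
    have e3 := back_eq hc k 0 hk z.
    split; apply: (modeq_small n) => //.
    + by rewrite -e1 e2.
    + by rewrite e3 -e2.
have hS : forall (e : seq nat) v, (forall k, k < n.-1 -> nth 0 e k = v) ->
    forall i : 'I_n, S e i = i * v.
  move=> e v he i; apply: S_const => k hk; apply: he.
  have := ltn_ord i; lia.
exists t, u, c; split.
- by have [] := hlt 0 z.
- by have [] := hlt 0 z.
- move=> hc; exact: (circ_eq hc 0 0 z z).
- move=> hc; apply: (modeq_small n); try by have [] := hlt 0 z.
  exact: (back_eq hc 0 0 z z).
- move=> i j; rewrite hA (hS d' u) ?(hS d t) //.
  + by move=> k hk; have [] := consts k hk.
  + by move=> k hk; have [] := consts k hk.
Qed.


Lemma mul_inj n t k j1 j2 : t * t = n * k + 1 -> j1 < n -> j2 < n ->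
  (j1 * t) %% n = (j2 * t) %% n -> j1 = j2.
Proof.
move=> ht h1 h2 e.
have : (j1 * t * t) %% n = (j2 * t * t) %% n by rewrite -modnMml e modnMml.
have E : forall j, j * t * t = (j * k) * n + j.
  by move=> j; rewrite -mulnA ht; lia.
by rewrite !E !modnMDl !modn_small.
Qed.

Definition mkrow n t := [seq ((k * t) %% n).+1 | k <- iota 0 n].

Lemma latin_row_mk n t k : 0 < n -> t * t = n * k + 1 -> latin_row n (mkrow n t).
Proof.
move=> n0 ht; split.
- by rewrite size_map size_iota.
- rewrite map_inj_in_uniq ?iota_uniq // => a b; rewrite !mem_iota.
  move=> /andP [_ ha] /andP [_ hb] [] e; exact: (mul_inj n t k).
- by apply/allP => x /mapP [k' _ ->]; rewrite ltn_pmod.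
Qed.

Lemma diff_mk n t : 0 < n -> t < n -> forall j, j < n.-1 ->
  nth 0 (diff_row n (mkrow n t)) j = t.
Proof.
move=> n0 tn j hj.
rewrite /diff_row (nth_map 0) ?size_iota // nth_iota // add0n /mkrow.
rewrite !(nth_map 0) ?size_iota; try lia.
rewrite !nth_iota; try lia.
rewrite !add0n; apply: diffmod1 => //.
by rewrite mulSn addnC.
Qed.

Definition Mc n u t : 'M[nat]_n := \matrix_(i < n, j < n) ((i * u + j * t) %% n).+1.

Lemma Mc_good n u t : 1 < n -> 0 < t -> t < n -> u < n ->
  (exists kt, t * t = n * kt + 1) -> (exists ku, u * u = n * ku + 1) ->
  (u %% n = t %% n \/ (u + t) %% n = 0) ->
  [/\ latin (Mc n u t), innerdist (Mc n u t) = minn ((n - t) %% n) t,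
      one_at_origin (Mc n u t) & row_product (Mc n u t)].
Proof.
move=> n1 t0 tn un [kt ht] [ku hu] hut.
have n0 : 0 < n by lia.
split.
- split.
  + by move=> i j; rewrite mxE ltn_pmod.
  + move=> i j1 j2; rewrite !mxE => -[] e; apply: val_inj.
    apply: (mul_inj n t kt _ _ ht (ltn_ord _) (ltn_ord _)).
    move/nmodeqP: e => [a [b e]]; apply/nmodeqP; exists a, b; lia.
  + move=> j i1 i2; rewrite !mxE => -[] e; apply: val_inj.
    apply: (mul_inj n u ku _ _ hu (ltn_ord _) (ltn_ord _)).
    move/nmodeqP: e => [a [b e]]; apply/nmodeqP; exists a, b; lia.
- apply: (innerdist_form n (Mc n u t) t u 0 n1 tn hut) => i j.
  by rewrite mxE addn0.
- by move=> i j hi hj; rewrite mxE hi hj !mul0n mod0n.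
- exists (diff_row n (mkrow n t)), (diff_row n (mkrow n u)), 0; split.
  + exists (mkrow n t); split => //; exact: (latin_row_mk n t kt).
  + exists (mkrow n u); split => //; exact: (latin_row_mk n u ku).
  + move=> i j; rewrite /prodm !mxE /= addn0 modn_mod.
    have := S_const (diff_row n (mkrow n u)) u i.
    have := S_const (diff_row n (mkrow n t)) t j.
    rewrite /S => -> ; last first.
      by move=> k hk; apply: diff_mk => //; have := ltn_ord j; lia.
    move=> ->; last first.
      by move=> k hk; apply: diff_mk => //; have := ltn_ord i; lia.
    done.
Qed.

Lemma Mc_circ n u t : (u + t) %% n = 0 -> circulant (Mc n u t).
Proof.
move=> hut i i' j j' hi hj; rewrite !mxE hi hj.
rewrite -modnDmr modnMml modnDmr.
have -> : i.+1 * u + j.+1 * t = (i * u + j * t) + (u + t) by lia.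
by rewrite -modnDmr hut addn0.
Qed.

Lemma Mc_back n t : back_circulant (Mc n t t).
Proof.
move=> i i' j j' hi hj; rewrite !mxE hi hj.
congr (_.+1); rewrite -[RHS]modnDmr modnMml modnDmr.
congr (_ %% _); lia.
Qed.

Lemma t_vals n h t : n = 2 * h -> 3 <= h -> t < n ->
  minn ((n - t) %% n) t = h - 1 -> t = h - 1 \/ t = h + 1.
Proof.
move=> nh h3 tn.
case: t tn => [|t] tn.
  by rewrite subn0 modnn; lia.
rewrite modn_small; lia.
Qed.

Lemma sum_mod n u t : t < n -> u < n -> 0 < t -> (u + t) %% n = 0 -> u = n - t.
Proof.
move=> tn un t0 h.
case: (ltnP (u + t) n) => hl.
  by move: h; rewrite modn_small; lia.
have e : u + t = (u + t - n) + n by lia.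
move: h; rewrite e modnDr modn_small; lia.
Qed.


Theorem mainTheorem13 (n : nat) (hn : 6 <= n) (heven : ~~ odd n) :
  (n %% 4 = 2 ->
     forall A : 'M[nat]_n, latin A -> (circulant A \/ back_circulant A) ->
       innerdist A = n./2 - 1 -> ~ row_product A) /\
  (n %% 4 = 0 ->
     (exists A1 A2 : 'M[nat]_n, A1 <> A2 /\
        forall A : 'M[nat]_n,
          [/\ latin A, circulant A, innerdist A = n./2 - 1,
              one_at_origin A & row_product A] <-> (A = A1 \/ A = A2)) /\
     (exists A1 A2 : 'M[nat]_n, A1 <> A2 /\
        forall A : 'M[nat]_n,
          [/\ latin A, back_circulant A, innerdist A = n./2 - 1,
              one_at_origin A & row_product A] <-> (A = A1 \/ A = A2))).
Proof.
have n1 : 1 < n by lia.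
have n0 : 0 < n by lia.
have nh : n = 2 * n./2 by rewrite mul2n even_halfK.
move: (n./2) nh => h nh.
have h3 : 3 <= h by lia.
have nd := divn_eq n 4.
move: (n %/ 4) nd => m nd.
have key : forall A : 'M[nat]_n, (circulant A \/ back_circulant A) ->
    innerdist A = h - 1 -> row_product A ->
    exists t u c, [/\ t = h - 1 \/ t = h + 1, u < n,
      (circulant A -> u = n - t), (back_circulant A -> u = t) &
      forall i j : 'I_n, A i j = ((i * u + j * t + c) %% n).+1].
  move=> A hcb hid rp.
  have [t [u [c [tn un hc hb hA]]]] := rp_struct n A n1 rp hcb.
  have hut : u %% n = t %% n \/ (u + t) %% n = 0.
    by case: hcb => H; [right; exact: hc | left; rewrite (hb H)].
  rewrite (innerdist_form n A t u c n1 tn hut hA) in hid.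
  have ht := t_vals n h t nh h3 tn hid.
  exists t, u, c; split => //.
  move=> H; apply: (sum_mod n u t tn un _ (hc H)); lia.
split.
- move=> h4 A lat hcb hid rp.
  have [t [u [c [ht un _ _ hA]]]] := key A hcb hid rp.
  have hm : h = 2 * m + 1 by lia.
  have [K hK] : exists K, h * t = K * n.
    by case: ht => ->; [exists m | exists (m + 1)]; nia.
  have hlt : h < n by lia.
  case: lat => _ rowinj _.
  have := rowinj (Ordinal n0) (Ordinal hlt) (Ordinal n0).
  rewrite !hA /= !mul0n !add0n hK modnMDl => /(_ erefl) /(congr1 val) /=.
  lia.
- move=> h4.
  have hm : h = 2 * m by lia.
  have m2 : 2 <= m by lia.
  have sq1 : exists k, (h - 1) * (h - 1) = n * k + 1.
    exists (m - 1); rewrite hm nh hm; nia.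
  have sq2 : exists k, (h + 1) * (h + 1) = n * k + 1.
    exists (m + 1); rewrite nh hm; nia.
  have idv : forall t, t = h - 1 \/ t = h + 1 -> minn ((n - t) %% n) t = h - 1.
    move=> t ht; rewrite modn_small; lia.
  have neq : forall u u' t t', t < n -> t' < n -> t <> t' ->
      Mc n u t <> Mc n u' t'.
    move=> u u' t t' tn tn' tt e.
    have := congr1 (fun M : 'M[nat]_n => M (Ordinal n0) (Ordinal n1)) e.
    rewrite !mxE /= !mul0n !add0n !mul1n !modn_small //; lia.
  have eqc : forall (A : 'M[nat]_n) t u c, one_at_origin A ->
      (forall i j : 'I_n, A i j = ((i * u + j * t + c) %% n).+1) ->
      A = Mc n u t.
    move=> A t u c ho hA.
    have c0 : c %% n = 0.
      have := ho (Ordinal n0) (Ordinal n0) erefl erefl.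
      by rewrite hA /= !mul0n !add0n => -[].
    apply/matrixP => i j; rewrite hA mxE.
    by rewrite -modnDmr c0 addn0.
  split.
  + exists (Mc n (h + 1) (h - 1)), (Mc n (h - 1) (h + 1)); split.
      apply: neq; lia.
    move=> A; split.
    * case=> lat hc hid ho rp.
      have [t [u [c [ht un hu _ hA]]]] := key A (or_introl hc) hid rp.
      rewrite (eqc A t u c ho hA) (hu hc).
      case: ht => ->; [left | right]; congr Mc; lia.
    * have P : forall u t, t = h - 1 \/ t = h + 1 -> u = n - t ->
          (exists kt, t * t = n * kt + 1) -> (exists ku, u * u = n * ku + 1) ->
          [/\ latin (Mc n u t), circulant (Mc n u t), innerdist (Mc n u t) = h - 1,
              one_at_origin (Mc n u t) & row_product (Mc n u t)].
        move=> u t ht hu st su.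
        have hut : (u + t) %% n = 0 by rewrite hu subnK ?modnn //; lia.
        have [] := Mc_good n u t n1 ltac:(lia) ltac:(lia) ltac:(lia) st su (or_intror hut).
        move=> l i o r; split => //; [exact: Mc_circ | by rewrite i idv].
      case=> ->.
      - apply: P => //; [by left | lia].
      - apply: P => //; [by right | lia].
  + exists (Mc n (h - 1) (h - 1)), (Mc n (h + 1) (h + 1)); split.
      apply: neq; lia.
    move=> A; split.
    * case=> lat hc hid ho rp.
      have [t [u [c [ht un _ hu hA]]]] := key A (or_intror hc) hid rp.
      rewrite (eqc A t u c ho hA) (hu hc).
      by case: ht => ->; [left | right].
    * have P : forall t, t = h - 1 \/ t = h + 1 ->
          (exists kt, t * t = n * kt + 1) ->
          [/\ latin (Mc n t t), back_circulant (Mc n t t), innerdist (Mc n t t) = h - 1,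
              one_at_origin (Mc n t t) & row_product (Mc n t t)].
        move=> t ht st.
        have [] := Mc_good n t t n1 ltac:(lia) ltac:(lia) ltac:(lia) st st (or_introl erefl).
        move=> l i o r; split => //; [exact: Mc_back | by rewrite i idv].
      case=> ->; apply: P => //; by [left | right].
Qed.
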